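(* Let $\mathbf{X}\in\mathbb{R}^{N_X}$, $\mathbf{Y}\in\mathbb{R}^{N_Y}$ be zero-mean jointly Gaussian, and consider representations $\mathbf{T}_1=\mathbf{A}\mathbf{X}+\boldsymbol{\zeta}_1$, $\mathbf{T}_2=\mathbf{B}\mathbf{X}+\boldsymbol{\zeta}_2$, where $\boldsymbol{\zeta}_1\sim\mathcal N(0,\Sigma_{\zeta_1})$, $\boldsymbol{\zeta}_2\sim\mathcal N(0,\Sigma_{\zeta_2})$ are independent of each other and of $(\mathbf{X},\mathbf{Y})$. For given Lagrange parameters $(\beta,\lambda,\gamma)$ with $\beta,\lambda>0$, $\gamma\ge0$, the self-consistent equations for minimizing $\mathcal{F}=-I(\mathbf{Y};\mathbf{T}_1,\mathbf{T}_2)+\beta I(\mathbf{T}_1;\mathbf{X})+\lambda I(\mathbf{T}_2;\mathbf{X})+\gamma I(\mathbf{T}_1;\mathbf{T}_2)$, restricted to this Gaussian family, yield the following iterative procedure for $(\mathbf{A},\Sigma_{\zeta_1},\mathbf{B},\Sigma_{\zeta_2})$ at iteration $t$ (all quantities with superscript $(t)$ computed from $\mathbf{A}^{(t)},\Sigma_{\zeta_1}^{(t)},\mathbf{B}^{(t)},\Sigma_{\zeta_2}^{(t)}$ via the formulas in the context): $$\Sigma_{\zeta_1}^{-1\,(t+1)}=\Sigma_{T_1}^{-1\,(t)}-\frac{\gamma}{\beta}\Xi_1^{T(t)}\Sigma_{T_2|T_1}^{-1\,(t)}\Xi_1^{(t)}+\frac1\beta\Psi_1^{T(t)}\Sigma_{Y|T_1,T_2}^{-1\,(t)}\Psi_1^{(t)},$$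 $$\mathbf{A}^{(t+1)}=\Sigma_{\zeta_1}^{(t+1)}\Big[-\frac{\gamma}{\beta}\Xi_1^{T(t)}\Sigma_{T_2|T_1}^{-1\,(t)}\mathbf{B}^{(t)}+\frac1\beta\Psi_1^{T(t)}\Sigma_{Y|T_1,T_2}^{-1\,(t)}(\Theta-\Psi_2^{(t)}\mathbf{B}^{(t)})\Big],$$ $$\Sigma_{\zeta_2}^{-1\,(t+1)}=\Sigma_{T_2}^{-1\,(t)}-\frac{\gamma}{\lambda}\Xi_2^{T(t)}\Sigma_{T_1|T_2}^{-1\,(t)}\Xi_2^{(t)}+\frac1\lambda\Psi_2^{T(t)}\Sigma_{Y|T_1,T_2}^{-1\,(t)}\Psi_2^{(t)},$$ $$\mathbf{B}^{(t+1)}=\Sigma_{\zeta_2}^{(t+1)}\Big[-\frac{\gamma}{\lambda}\Xi_2^{T(t)}\Sigma_{T_1|T_2}^{-1\,(t)}\mathbf{A}^{(t+1)}+\frac1\lambda\Psi_2^{T(t)}\Sigma_{Y|T_1,T_2}^{-1\,(t)}(\Theta-\Psi_1^{(t)}\mathbf{A}^{(t+1)})\Big].$$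
   Context: Notation (all for current $\mathbf{A},\mathbf{B},\Sigma_{\zeta_1},\Sigma_{\zeta_2}$): $\Sigma_X$, $\Sigma_{YX}$ are the covariance and cross-covariance of $(\mathbf{X},\mathbf{Y})$; $\Theta=\Sigma_{YX}\Sigma_X^{-1}$; $\Sigma_{Y|X}$ is the conditional covariance of $\mathbf{Y}$ given $\mathbf{X}$. $\Sigma_{T_1}=\mathbf{A}\Sigma_X\mathbf{A}^T+\Sigma_{\zeta_1}$, $\Sigma_{T_2}=\mathbf{B}\Sigma_X\mathbf{B}^T+\Sigma_{\zeta_2}$. $\Sigma_{X|T_1}=(\Sigma_X^{-1}+\mathbf{A}^T\Sigma_{\zeta_1}^{-1}\mathbf{A})^{-1}$, $\Sigma_{X|T_2}=(\Sigma_X^{-1}+\mathbf{B}^T\Sigma_{\zeta_2}^{-1}\mathbf{B})^{-1}$, $\Sigma_{T_2|T_1}=\mathbf{B}\Sigma_{X|T_1}\mathbf{B}^T+\Sigma_{\zeta_2}$, $\Sigma_{T_1|T_2}=\mathbf{A}\Sigma_{X|T_2}\mathbf{A}^T+\Sigma_{\zeta_1}$. $\Xi_1=\mathbf{B}\Sigma_X\mathbf{A}^T\Sigma_{T_1}^{-1}$, $\Xi_2=\mathbf{A}\Sigma_X\mathbf{B}^T\Sigma_{T_2}^{-1}$. $\Psi_1=\Theta(\Sigma_X\mathbf{A}^T\Sigma_{T_1|T_2}^{-1}-\Sigma_X\mathbf{B}^T\Sigma_{T_2|T_1}^{-1}\mathbf{B}\Sigma_X\mathbf{A}^T\Sigma_{T_1}^{-1})$,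 $\Psi_2=\Theta(\Sigma_X\mathbf{B}^T\Sigma_{T_2|T_1}^{-1}-\Sigma_X\mathbf{A}^T\Sigma_{T_1|T_2}^{-1}\mathbf{A}\Sigma_X\mathbf{B}^T\Sigma_{T_2}^{-1})$. $\Sigma_{X|T_1,T_2}=\Sigma_X-\Sigma_X\mathbf{A}^T\Sigma_{T_1|T_2}^{-1}\mathbf{A}\Sigma_X+\Sigma_X\mathbf{A}^T\Sigma_{T_1|T_2}^{-1}\mathbf{A}\Sigma_X\mathbf{B}^T\Sigma_{T_2}^{-1}\mathbf{B}\Sigma_X+\Sigma_X\mathbf{B}^T\Sigma_{T_2|T_1}^{-1}\mathbf{B}\Sigma_X\mathbf{A}^T\Sigma_{T_1}^{-1}\mathbf{A}\Sigma_X-\Sigma_X\mathbf{B}^T\Sigma_{T_2|T_1}^{-1}\mathbf{B}\Sigma_X$, and $\Sigma_{Y|T_1,T_2}=\Theta\Sigma_{X|T_1,T_2}\Theta^T+\Sigma_{Y|X}$. The self-consistent equations referred to are: $p(t_1|x)\propto p(t_1)\exp\{\frac{\gamma}{\beta}D_{KL}[p(\mathbf{T}_2|x)\|p(\mathbf{T}_2|t_1)]-\frac1\beta\mathbb{E}_{\mathbf{T}_2|x}D_{KL}[p(\mathbf{Y}|x)\|p(\mathbf{Y}|t_1,\mathbf{T}_2)]\}$ and the symmetric one for $p(t_2|x)$ (with $\lambda$ in place of $\beta$), iterated by first updating $\mathbf{T}_1$ and then $\mathbf{T}_2$ using the updated $\mathbf{T}_1$. *)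

(* Defs.v *)
From mathcomp Require Import all_boot all_order all_algebra.
From mathcomp Require Import reals.
From mathcomp.analysis Require Import sequences exp trigo.
Set Implicit Arguments. Unset Strict Implicit. Unset Printing Implicit Defensive.
Import Order.TTheory GRing.Theory Num.Theory.
Local Open Scope ring_scope.

Section GaussDefs.
Context {R : realType}.

Definition quad (k : nat) (v : 'cV[R]_k) (M : 'M[R]_k) : R := (v^T *m M *m v) 0 0.

Definition posdef (k : nat) (M : 'M[R]_k) : Prop :=
  M^T = M /\ forall v : 'cV[R]_k, v != 0 -> 0 < quad v M.

Definition gauss_pdf (k : nat) (m : 'cV[R]_k) (S : 'M[R]_k) (t : 'cV[R]_k) : R :=
  expR (- (1 / 2) * quad (t - m) (invmx S)) / Num.sqrt ((2 * pi) ^+ k * \det S).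

Definition gaussKL (k : nat) (m0 : 'cV[R]_k) (S0 : 'M[R]_k)
    (m1 : 'cV[R]_k) (S1 : 'M[R]_k) : R :=
  (1 / 2) * (\tr (invmx S1 *m S0) + quad (m1 - m0) (invmx S1) - k%:R
             + ln (\det S1 / \det S0)).

(* E_{z ~ N(mu, Sg)} D_KL[ N(m0,S0) || N(a + M z, S1) ]
   (closed form of the Gaussian expectation of the quadratic in z) *)
Definition gaussKL_exp (k n : nat) (m0 : 'cV[R]_k) (S0 : 'M[R]_k)
    (a : 'cV[R]_k) (M : 'M[R]_(k, n)) (mu : 'cV[R]_n) (Sg : 'M[R]_n)
    (S1 : 'M[R]_k) : R :=
  gaussKL m0 S0 (a + M *m mu) S1 + (1 / 2) * \tr (invmx S1 *m M *m Sg *m M^T).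

Variables (NX NY K1 K2 : nat).

(* All quantities below take the same argument list
   SX SYX SY A Sz1 B Sz2  (covariance of X, cross-covariance Sigma_{YX},
   covariance of Y, encoder A, noise cov. Sigma_{zeta_1}, encoder B,
   noise cov. Sigma_{zeta_2}). *)
Definition Theta (SX : 'M[R]_NX) (SYX : 'M[R]_(NY, NX)) (SY : 'M[R]_NY) (A : 'M[R]_(K1, NX)) (Sz1 : 'M[R]_K1) (B : 'M[R]_(K2, NX)) (Sz2 : 'M[R]_K2) : 'M[R]_(NY, NX) := SYX *m invmx SX.
Definition SYgX (SX : 'M[R]_NX) (SYX : 'M[R]_(NY, NX)) (SY : 'M[R]_NY) (A : 'M[R]_(K1, NX)) (Sz1 : 'M[R]_K1) (B : 'M[R]_(K2, NX)) (Sz2 : 'M[R]_K2) : 'M[R]_NY := SY - SYX *m invmx SX *m SYX^T.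
Definition ST1 (SX : 'M[R]_NX) (SYX : 'M[R]_(NY, NX)) (SY : 'M[R]_NY) (A : 'M[R]_(K1, NX)) (Sz1 : 'M[R]_K1) (B : 'M[R]_(K2, NX)) (Sz2 : 'M[R]_K2) : 'M[R]_K1 := A *m SX *m A^T + Sz1.
Definition ST2 (SX : 'M[R]_NX) (SYX : 'M[R]_(NY, NX)) (SY : 'M[R]_NY) (A : 'M[R]_(K1, NX)) (Sz1 : 'M[R]_K1) (B : 'M[R]_(K2, NX)) (Sz2 : 'M[R]_K2) : 'M[R]_K2 := B *m SX *m B^T + Sz2.
Definition SXgT1 (SX : 'M[R]_NX) (SYX : 'M[R]_(NY, NX)) (SY : 'M[R]_NY) (A : 'M[R]_(K1, NX)) (Sz1 : 'M[R]_K1) (B : 'M[R]_(K2, NX)) (Sz2 : 'M[R]_K2) : 'M[R]_NX :=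
  invmx (invmx SX + A^T *m invmx Sz1 *m A).
Definition SXgT2 (SX : 'M[R]_NX) (SYX : 'M[R]_(NY, NX)) (SY : 'M[R]_NY) (A : 'M[R]_(K1, NX)) (Sz1 : 'M[R]_K1) (B : 'M[R]_(K2, NX)) (Sz2 : 'M[R]_K2) : 'M[R]_NX :=
  invmx (invmx SX + B^T *m invmx Sz2 *m B).
Definition ST2gT1 (SX : 'M[R]_NX) (SYX : 'M[R]_(NY, NX)) (SY : 'M[R]_NY) (A : 'M[R]_(K1, NX)) (Sz1 : 'M[R]_K1) (B : 'M[R]_(K2, NX)) (Sz2 : 'M[R]_K2) : 'M[R]_K2 :=
  B *m SXgT1 SX SYX SY A Sz1 B Sz2 *m B^T + Sz2.
Definition ST1gT2 (SX : 'M[R]_NX) (SYX : 'M[R]_(NY, NX)) (SY : 'M[R]_NY) (A : 'M[R]_(K1, NX)) (Sz1 : 'M[R]_K1) (B : 'M[R]_(K2, NX)) (Sz2 : 'M[R]_K2) : 'M[R]_K1 :=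
  A *m SXgT2 SX SYX SY A Sz1 B Sz2 *m A^T + Sz1.
Definition Xi1 (SX : 'M[R]_NX) (SYX : 'M[R]_(NY, NX)) (SY : 'M[R]_NY) (A : 'M[R]_(K1, NX)) (Sz1 : 'M[R]_K1) (B : 'M[R]_(K2, NX)) (Sz2 : 'M[R]_K2) : 'M[R]_(K2, K1) :=
  B *m SX *m A^T *m invmx (ST1 SX SYX SY A Sz1 B Sz2).
Definition Xi2 (SX : 'M[R]_NX) (SYX : 'M[R]_(NY, NX)) (SY : 'M[R]_NY) (A : 'M[R]_(K1, NX)) (Sz1 : 'M[R]_K1) (B : 'M[R]_(K2, NX)) (Sz2 : 'M[R]_K2) : 'M[R]_(K1, K2) :=
  A *m SX *m B^T *m invmx (ST2 SX SYX SY A Sz1 B Sz2).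
Definition Psi1 (SX : 'M[R]_NX) (SYX : 'M[R]_(NY, NX)) (SY : 'M[R]_NY) (A : 'M[R]_(K1, NX)) (Sz1 : 'M[R]_K1) (B : 'M[R]_(K2, NX)) (Sz2 : 'M[R]_K2) : 'M[R]_(NY, K1) :=
  Theta SX SYX SY A Sz1 B Sz2 *m
   (SX *m A^T *m invmx (ST1gT2 SX SYX SY A Sz1 B Sz2)
    - SX *m B^T *m invmx (ST2gT1 SX SYX SY A Sz1 B Sz2) *m B *m SX *m A^T
        *m invmx (ST1 SX SYX SY A Sz1 B Sz2)).
Definition Psi2 (SX : 'M[R]_NX) (SYX : 'M[R]_(NY, NX)) (SY : 'M[R]_NY) (A : 'M[R]_(K1, NX)) (Sz1 : 'M[R]_K1) (B : 'M[R]_(K2, NX)) (Sz2 : 'M[R]_K2) : 'M[R]_(NY, K2) :=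
  Theta SX SYX SY A Sz1 B Sz2 *m
   (SX *m B^T *m invmx (ST2gT1 SX SYX SY A Sz1 B Sz2)
    - SX *m A^T *m invmx (ST1gT2 SX SYX SY A Sz1 B Sz2) *m A *m SX *m B^T
        *m invmx (ST2 SX SYX SY A Sz1 B Sz2)).
Definition SXgT12 (SX : 'M[R]_NX) (SYX : 'M[R]_(NY, NX)) (SY : 'M[R]_NY) (A : 'M[R]_(K1, NX)) (Sz1 : 'M[R]_K1) (B : 'M[R]_(K2, NX)) (Sz2 : 'M[R]_K2) : 'M[R]_NX :=
  let S21 := ST2gT1 SX SYX SY A Sz1 B Sz2 in
  let S12 := ST1gT2 SX SYX SY A Sz1 B Sz2 in
  SX - SX *m A^T *m invmx S12 *m A *m SX
     + SX *m A^T *m invmx S12 *m A *m SX *m B^T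
         *m invmx (ST2 SX SYX SY A Sz1 B Sz2) *m B *m SX
     + SX *m B^T *m invmx S21 *m B *m SX *m A^T
         *m invmx (ST1 SX SYX SY A Sz1 B Sz2) *m A *m SX
     - SX *m B^T *m invmx S21 *m B *m SX.
Definition SYgT12 (SX : 'M[R]_NX) (SYX : 'M[R]_(NY, NX)) (SY : 'M[R]_NY) (A : 'M[R]_(K1, NX)) (Sz1 : 'M[R]_K1) (B : 'M[R]_(K2, NX)) (Sz2 : 'M[R]_K2) : 'M[R]_NY :=
  Theta SX SYX SY A Sz1 B Sz2 *m SXgT12 SX SYX SY A Sz1 B Sz2
    *m (Theta SX SYX SY A Sz1 B Sz2)^T + SYgX SX SYX SY A Sz1 B Sz2.

(* Right-hand side (unnormalised) of the self-consistent equation for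
   p(t1|x), all distributions taken in the Gaussian family at the current
   parameters:
     p(t1)       = N(0, Sigma_{T1}),
     p(T2|x)     = N(B x, Sigma_{zeta_2}),
     p(T2|t1)    = N(Xi_1 t1, Sigma_{T2|T1}),
     p(Y|x)      = N(Theta x, Sigma_{Y|X}),
     p(Y|t1,t2)  = N(Psi_1 t1 + Psi_2 t2, Sigma_{Y|T1,T2}). *)
Definition sc_rhs1 (beta gamma : R) (SX : 'M[R]_NX) (SYX : 'M[R]_(NY, NX)) (SY : 'M[R]_NY) (A : 'M[R]_(K1, NX)) (Sz1 : 'M[R]_K1) (B : 'M[R]_(K2, NX)) (Sz2 : 'M[R]_K2)
    (x : 'cV[R]_NX) (t1 : 'cV[R]_K1) : R :=
  gauss_pdf 0 (ST1 SX SYX SY A Sz1 B Sz2) t1 *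
  expR (gamma / beta *
          gaussKL (B *m x) Sz2 (Xi1 SX SYX SY A Sz1 B Sz2 *m t1)
                  (ST2gT1 SX SYX SY A Sz1 B Sz2)
        - 1 / beta *
          gaussKL_exp (Theta SX SYX SY A Sz1 B Sz2 *m x) (SYgX SX SYX SY A Sz1 B Sz2)
            (Psi1 SX SYX SY A Sz1 B Sz2 *m t1) (Psi2 SX SYX SY A Sz1 B Sz2)
            (B *m x) Sz2 (SYgT12 SX SYX SY A Sz1 B Sz2)).

(* Right-hand side (unnormalised) of the self-consistent equation for
   p(t2|x), where T1 has already been updated, i.e. p(T1|x) = N(A1 x, Sz1new),
   and the remaining distributions are those of the current parameters:
     p(t2) = N(0, Sigma_{T2}),  p(T1|t2) = N(Xi_2 t2, Sigma_{T1|T2}),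
     p(Y|x) = N(Theta x, Sigma_{Y|X}),
     p(Y|t1,t2) = N(Psi_1 t1 + Psi_2 t2, Sigma_{Y|T1,T2}). *)
Definition sc_rhs2 (lambda gamma : R) (SX : 'M[R]_NX) (SYX : 'M[R]_(NY, NX)) (SY : 'M[R]_NY) (A : 'M[R]_(K1, NX)) (Sz1 : 'M[R]_K1) (B : 'M[R]_(K2, NX)) (Sz2 : 'M[R]_K2)
    (A1 : 'M[R]_(K1, NX)) (Sz1new : 'M[R]_K1)
    (x : 'cV[R]_NX) (t2 : 'cV[R]_K2) : R :=
  gauss_pdf 0 (ST2 SX SYX SY A Sz1 B Sz2) t2 *
  expR (gamma / lambda *
          gaussKL (A1 *m x) Sz1new (Xi2 SX SYX SY A Sz1 B Sz2 *m t2)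
                  (ST1gT2 SX SYX SY A Sz1 B Sz2)
        - 1 / lambda *
          gaussKL_exp (Theta SX SYX SY A Sz1 B Sz2 *m x) (SYgX SX SYX SY A Sz1 B Sz2)
            (Psi2 SX SYX SY A Sz1 B Sz2 *m t2) (Psi1 SX SYX SY A Sz1 B Sz2)
            (A1 *m x) Sz1new (SYgT12 SX SYX SY A Sz1 B Sz2)).

End GaussDefs.

(* Main.v *)
Require Import Defs.
From mathcomp Require Import all_boot all_order all_algebra.
From mathcomp Require Import reals.
From mathcomp.analysis Require Import sequences exp trigo.
From mathcomp Require Import ring lra.
Import Order.TTheory GRing.Theory Num.Theory.
Local Open Scope ring_scope.

Set Implicit Arguments. Unset Strict Implicit. Unset Printing Implicit Defensive.

Section Helpers.
Context {R : realType}.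

Definition bil m n (u : 'cV[R]_m) (M : 'M[R]_(m, n)) (w : 'cV[R]_n) : R :=
  (u^T *m M *m w) 0 0.

Lemma quadE k (v : 'cV[R]_k) M : quad v M = bil v M v. Proof. by []. Qed.

Lemma bilDl m n (u1 u2 : 'cV[R]_m) M (w : 'cV[R]_n) :
  bil (u1 + u2) M w = bil u1 M w + bil u2 M w.
Proof. by rewrite /bil linearD /= !mulmxDl mxE. Qed.
Lemma bilDr m n (u : 'cV[R]_m) M (w1 w2 : 'cV[R]_n) :
  bil u M (w1 + w2) = bil u M w1 + bil u M w2.
Proof. by rewrite /bil mulmxDr mxE. Qed.
Lemma bilNl m n (u : 'cV[R]_m) M (w : 'cV[R]_n) : bil (- u) M w = - bil u M w.
Proof. by rewrite /bil linearN /= !mulNmx mxE. Qed.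
Lemma bilNr m n (u : 'cV[R]_m) M (w : 'cV[R]_n) : bil u M (- w) = - bil u M w.
Proof. by rewrite /bil mulmxN mxE. Qed.
Lemma bilDm m n (u : 'cV[R]_m) M1 M2 (w : 'cV[R]_n) :
  bil u (M1 + M2) w = bil u M1 w + bil u M2 w.
Proof. by rewrite /bil mulmxDr mulmxDl mxE. Qed.
Lemma bilNm m n (u : 'cV[R]_m) M (w : 'cV[R]_n) : bil u (- M) w = - bil u M w.
Proof. by rewrite /bil mulmxN mulNmx mxE. Qed.
Lemma bilZm m n (u : 'cV[R]_m) a M (w : 'cV[R]_n) : bil u (a *: M) w = a * bil u M w.
Proof. by rewrite /bil -scalemxAr -scalemxAl mxE. Qed.
Lemma bil_mull m m' n (X : 'M[R]_(m', m)) (u : 'cV[R]_m) M (w : 'cV[R]_n) :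
  bil (X *m u) M w = bil u (X^T *m M) w.
Proof. by rewrite /bil trmx_mul !mulmxA. Qed.
Lemma bil_mulr m n n' (u : 'cV[R]_m) M (Y : 'M[R]_(n, n')) (w : 'cV[R]_n') :
  bil u M (Y *m w) = bil u (M *m Y) w.
Proof. by rewrite /bil !mulmxA. Qed.
Lemma bil_tr m n (u : 'cV[R]_m) M (w : 'cV[R]_n) : bil u M w = bil w M^T u.
Proof.
by rewrite /bil -[in LHS](trmxK (u^T *m M *m w)) mxE !trmx_mul trmxK mulmxA.
Qed.
Lemma bil0l m n M (w : 'cV[R]_n) : bil (0 : 'cV[R]_m) M w = 0.
Proof. by rewrite /bil linear0 !mul0mx mxE. Qed.
Lemma bil0r m n (u : 'cV[R]_m) M : bil u M (0 : 'cV[R]_n) = 0.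
Proof. by rewrite /bil mulmx0 mxE. Qed.

Lemma bilZr m n (u : 'cV[R]_m) a M (w : 'cV[R]_n) : bil u M (a *: w) = a * bil u M w.
Proof. by rewrite /bil -scalemxAr mxE. Qed.
Lemma bil1 m n (u : 'cV[R]_m) M (w : 'cV[R]_n) : bil u M w = bil u 1%:M (M *m w).
Proof. by rewrite bil_mulr mul1mx. Qed.

Lemma core_id k n1 n2 (Q Qn : 'M[R]_k) (X : 'M[R]_(n1, k)) (u : 'cV[R]_n1)
  (M : 'M[R]_n1) (P : 'M[R]_(n2, k)) (w : 'cV[R]_n2) (N : 'M[R]_n2)
  (m : 'cV[R]_k) (a b : R) :
  M^T = M -> N^T = N -> Qn^T = Qn ->
  Qn = Q - a *: (X^T *m M *m X) + b *: (P^T *m N *m P) ->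
  Qn *m m = - a *: (X^T *m M *m u) + b *: (P^T *m N *m w) ->
  forall t : 'cV[R]_k,
  (-(1/2) * quad t Q + a/2 * quad (X *m t - u) M - b/2 * quad (P *m t - w) N)
  - (-(1/2) * quad 0 Q + a/2 * quad (- u) M - b/2 * quad (- w) N)
  = -(1/2) * quad (t - m) Qn - (-(1/2) * quad (- m) Qn).
Proof.
move=> sM sN sQn EQn Em t.
rewrite !quadE !(bilDl, bilDr, bilNl, bilNr, bil0l, bil0r).
have e1 : bil u M (X *m t) = bil (X *m t) M u by rewrite bil_tr sM.
have e2 : bil w N (P *m t) = bil (P *m t) N w by rewrite bil_tr sN.
have e3 : bil m Qn t = bil t Qn m by rewrite bil_tr sQn.
rewrite e1 e2 e3.
have e4 : bil t Qn m = - a * bil (X *m t) M u + b * bil (P *m t) N w.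
  rewrite bil1 Em bilDr !bilZr -!mulmxA !bil_mulr !mul1mx.
  by rewrite !bil_mull.
have e5 : bil t Qn t = bil t Q t - a * bil (X *m t) M (X *m t)
                       + b * bil (P *m t) N (P *m t).
  by rewrite {1}EQn !bilDm bilNm !bilZm !bil_mull !bil_mulr ?mulmxA.
rewrite e4 e5.
ring.
Qed.


Definition psd k (M : 'M[R]_k) : Prop := M^T = M /\ forall v, 0 <= quad v M.

Lemma quad1_gt0 k (v : 'cV[R]_k) : v != 0 -> 0 < quad v 1%:M.
Proof.
move=> nz; rewrite /quad mulmx1 mxE.
have ge : forall j : 'I_k, true -> 0 <= v^T 0 j * v j 0.
  by move=> j _; rewrite mxE -expr2 sqr_ge0.
rewrite lt_def sumr_ge0 // andbT; apply/eqP => /(psumr_eq0P ge) H.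
move/eqP: nz; apply; apply/matrixP => i j; rewrite ord1 !mxE.
by have /eqP := H i isT; rewrite mxE mulf_eq0 orbb => /eqP.
Qed.

Lemma quadD k (v : 'cV[R]_k) M1 M2 : quad v (M1 + M2) = quad v M1 + quad v M2.
Proof. by rewrite !quadE bilDm. Qed.
Lemma quadZ k (v : 'cV[R]_k) a M : quad v (a *: M) = a * quad v M.
Proof. by rewrite !quadE bilZm. Qed.

Lemma posdef_unit k (M : 'M[R]_k) : posdef M -> M \in unitmx.
Proof.
move=> [_ pM]; rewrite unitmxE unitfE; apply/det0P => -[v nz vM].
have : v^T != 0 by rewrite -(inj_eq (@trmx_inj _ _ _)) trmxK linear0.
move/pM; rewrite /quad trmxK vM mul0mx mxE.
by rewrite ltxx.
Qed.

Lemma posdef_inv k (M : 'M[R]_k) : posdef M -> posdef (invmx M).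
Proof.
move=> pM; have uM := posdef_unit pM; case: pM => sM pM; split.
  by rewrite trmx_inv sM.
move=> v nz; have -> : v = M *m (invmx M *m v) by rewrite mulKVmx.
have nz' : invmx M *m v != 0.
  by apply: contraNneq nz => e; rewrite -(mulKVmx uM v) e mulmx0.
move: (pM _ nz'); rewrite !quadE bil_mull bil_mulr sM.
by rewrite -!mulmxA mulKVmx // mulmxV // mulmx1.
Qed.

Lemma posdef_add k (M N : 'M[R]_k) : posdef M -> psd N -> posdef (M + N).
Proof.
move=> [sM pM] [sN pN]; split; first by rewrite linearD /= sM sN.
by move=> v nz; rewrite quadD; have := pM v nz; have := pN v; lra.
Qed.

Lemma psd_conj k n (X : 'M[R]_(k, n)) (M : 'M[R]_n) : posdef M ->
  psd (X *m M *m X^T).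
Proof.
move=> [sM pM]; split; first by rewrite !trmx_mul trmxK sM mulmxA.
move=> v; have -> : quad v (X *m M *m X^T) = quad (X^T *m v) M by rewrite !quadE bil_mull bil_mulr trmxK ?mulmxA.
have [->|nz] := eqVneq (X^T *m v) 0; first by rewrite /quad mulmx0 mxE.
exact/ltW/pM.
Qed.

Lemma posdef_det_gt0 k (M : 'M[R]_k) : posdef M -> 0 < \det M.
Proof.
move=> pM.
pose Mp : 'M[{poly R}]_k :=
  \matrix_(i, j) (((1%:M : 'M[R]_k) i j)%:P * (1 - 'X) + (M i j)%:P * 'X).
have ev s : (\det Mp).[s] = \det ((1 - s) *: 1%:M + s *: M).
  rewrite -horner_evalE -det_map_mx; congr (\det _).
  by apply/matrixP => i j; rewrite !mxE /= horner_evalE !hornerE mulrC [s * _]mulrC.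
have pd s : 0 <= s <= 1 -> posdef ((1 - s) *: 1%:M + s *: M).
  case/andP => s0 s1; case: pM => sM pM; split.
    by rewrite linearD !linearZ /= trmx1 sM.
  move=> v nz; rewrite quadD !quadZ.
  have q1 := quad1_gt0 nz; have qM := pM _ nz.
  have [->|sn0] := eqVneq s 0; first by rewrite subr0 mul1r mul0r addr0.
  have sp : 0 < s by rewrite lt_def sn0 s0.
  have s1' : 0 <= 1 - s by lra. by apply: ltr_wpDl; [apply: mulr_ge0 =>//; apply: ltW | apply: mulr_gt0].
have nz s : 0 <= s <= 1 -> (\det Mp).[s] != 0.
  by move=> hs; rewrite ev -unitfE -unitmxE; apply: posdef_unit; apply: pd.
rewrite real_ltNge ?num_real //; apply/negP => le0.
have := @poly_ivt _ (- \det Mp) 0 1 ler01.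
have h0 : (\det Mp).[0] = 1 by rewrite ev subr0 scale1r scale0r addr0 det1.
have h1 : (\det Mp).[1] = \det M by rewrite ev subrr scale0r add0r scale1r.
rewrite !hornerN h0 h1 oppr_le0 ler01 /= oppr_ge0.
move=> /(_ le0) [x hx]; rewrite /root hornerN oppr_eq0.
by rewrite (negPf (nz x hx)).
Qed.


Lemma posdef_add' k (M N : 'M[R]_k) : psd M -> posdef N -> posdef (M + N).
Proof. by move=> pM pN; rewrite addrC; apply: posdef_add. Qed.

Lemma psd_conjT k n (X : 'M[R]_(n, k)) (M : 'M[R]_n) : posdef M ->
  psd (X^T *m M *m X).
Proof. by move=> pM; have := psd_conj X^T pM; rewrite trmxK. Qed.

Lemma woodbury n k (S : 'M[R]_n) (A : 'M[R]_(k, n)) (Z : 'M[R]_k) :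
  S \in unitmx -> Z \in unitmx -> (A *m S *m A^T + Z) \in unitmx ->
  invmx (invmx S + A^T *m invmx Z *m A)
  = S - S *m A^T *m invmx (A *m S *m A^T + Z) *m A *m S.
Proof.
move=> uS uZ uT; set T := A *m S *m A^T + Z.
set W := S - _.
have a1 : invmx S *m W = 1%:M - A^T *m invmx T *m A *m S.
  by rewrite /W mulmxBr !mulmxA mulVmx // !mul1mx.
have b : A^T *m invmx Z *m A *m S *m A^T = A^T *m invmx Z *m T - A^T.
  rewrite /T mulmxDr -!mulmxA mulVmx // mulmx1.
  by rewrite !mulmxA addrK.
have a2 : A^T *m invmx Z *m A *m W = A^T *m invmx T *m A *m S.
  rewrite /W mulmxBr !mulmxA b mulmxBl -[A^T *m invmx Z *m T *m invmx T]mulmxA.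
  rewrite mulmxV // mulmx1 mulmxBl mulmxBl opprB.
  by rewrite addrC subrK.
have H : (invmx S + A^T *m invmx Z *m A) *m W = 1%:M.
  by rewrite mulmxDl a1 a2 subrK.
have [uM _] := mulmx1_unit H.
by rewrite -[RHS](mulKmx uM W) H mulmx1.
Qed.


Section Spec.
Context (NX NY K1 K2 : nat).
Context (SX : 'M[R]_NX) (SYX : 'M[R]_(NY, NX)) (SY : 'M[R]_NY)
  (A : 'M[R]_(K1, NX)) (Sz1 : 'M[R]_K1) (B : 'M[R]_(K2, NX)) (Sz2 : 'M[R]_K2).

Lemma pd_ST1 : posdef SX -> posdef Sz1 ->
  posdef (ST1 SX SYX SY A Sz1 B Sz2).
Proof. by move=> pX p1; apply: posdef_add' => //; apply: psd_conj. Qed.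
Lemma pd_ST2 : posdef SX -> posdef Sz2 ->
  posdef (ST2 SX SYX SY A Sz1 B Sz2).
Proof. by move=> pX p1; apply: posdef_add' => //; apply: psd_conj. Qed.
Lemma pd_SXgT1 : posdef SX -> posdef Sz1 ->
  posdef (SXgT1 SX SYX SY A Sz1 B Sz2).
Proof.
move=> pX p1; apply: posdef_inv; apply: posdef_add; first exact: posdef_inv.
by apply: psd_conjT; apply: posdef_inv.
Qed.
Lemma pd_SXgT2 : posdef SX -> posdef Sz2 ->
  posdef (SXgT2 SX SYX SY A Sz1 B Sz2).
Proof.
move=> pX p1; apply: posdef_inv; apply: posdef_add; first exact: posdef_inv.
by apply: psd_conjT; apply: posdef_inv.
Qed.
Lemma pd_S21 : posdef SX -> posdef Sz1 -> posdef Sz2 ->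
  posdef (ST2gT1 SX SYX SY A Sz1 B Sz2).
Proof. by move=> pX p1 p2; apply: posdef_add' => //; apply: psd_conj; apply: pd_SXgT1. Qed.
Lemma pd_S12 : posdef SX -> posdef Sz1 -> posdef Sz2 ->
  posdef (ST1gT2 SX SYX SY A Sz1 B Sz2).
Proof. by move=> pX p1 p2; apply: posdef_add' => //; apply: psd_conj; apply: pd_SXgT2. Qed.

Lemma key_id : posdef SX -> posdef Sz1 -> posdef Sz2 ->
  invmx (ST2 SX SYX SY A Sz1 B Sz2) *m (B *m SX *m A^T)
    *m invmx (ST1gT2 SX SYX SY A Sz1 B Sz2)
  = invmx (ST2gT1 SX SYX SY A Sz1 B Sz2) *m (B *m SX *m A^T)
    *m invmx (ST1 SX SYX SY A Sz1 B Sz2).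
Proof.
move=> pX p1 p2.
have uX := posdef_unit pX; have u1 := posdef_unit p1; have u2 := posdef_unit p2.
have uT1 := posdef_unit (pd_ST1 pX p1).
have uT2 := posdef_unit (pd_ST2 pX p2).
have u21 := posdef_unit (pd_S21 pX p1 p2).
have u12 := posdef_unit (pd_S12 pX p1 p2).
have sX : SX^T = SX by case: pX.
set T1 := ST1 SX SYX SY A Sz1 B Sz2 in uT1 *.
set T2 := ST2 SX SYX SY A Sz1 B Sz2 in uT2 *.
set S21 := ST2gT1 SX SYX SY A Sz1 B Sz2 in u21 *.
set S12 := ST1gT2 SX SYX SY A Sz1 B Sz2 in u12 *.
set C := B *m SX *m A^T.
have CT : C^T = A *m SX *m B^T by rewrite /C !trmx_mul trmxK sX mulmxA.
have e21 : S21 = T2 - C *m invmx T1 *m C^T.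
  rewrite /S21 /ST2gT1 /SXgT1 woodbury // -/(ST1 SX SYX SY A Sz1 B Sz2) -/T1.
  rewrite CT /T2 /ST2 mulmxBr mulmxBl addrAC /C !mulmxA.
  done.
have e12 : S12 = T1 - C^T *m invmx T2 *m C.
  rewrite /S12 /ST1gT2 /SXgT2 woodbury // -/(ST2 SX SYX SY A Sz1 B Sz2) -/T2.
  rewrite CT /T1 /ST1 mulmxBr mulmxBl addrAC /C !mulmxA.
  done.
have f1 : S21 *m (invmx T2 *m C) = C - C *m invmx T1 *m C^T *m invmx T2 *m C.
  by rewrite e21 mulmxBl mulmxA mulmxV // mul1mx !mulmxA.
have f2 : C *m invmx T1 *m S12 = C - C *m invmx T1 *m C^T *m invmx T2 *m C.
  by rewrite e12 mulmxBr -[C *m invmx T1 *m T1]mulmxA mulVmx // mulmx1 !mulmxA.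
rewrite -[LHS](mulKmx u21) [S21 *m _]mulmxA f1 -f2.
by rewrite mulmxK // !mulmxA.
Qed.


Lemma sym_SXgT12 : posdef SX -> posdef Sz1 -> posdef Sz2 ->
  (SXgT12 SX SYX SY A Sz1 B Sz2)^T = SXgT12 SX SYX SY A Sz1 B Sz2.
Proof.
move=> pX p1 p2.
have sX : SX^T = SX by case: pX.
have s21 : (invmx (ST2gT1 SX SYX SY A Sz1 B Sz2))^T = invmx (ST2gT1 SX SYX SY A Sz1 B Sz2).
  by rewrite trmx_inv; case: (pd_S21 pX p1 p2) => ->.
have s12 : (invmx (ST1gT2 SX SYX SY A Sz1 B Sz2))^T = invmx (ST1gT2 SX SYX SY A Sz1 B Sz2).
  by rewrite trmx_inv; case: (pd_S12 pX p1 p2) => ->.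
have sT1 : (invmx (ST1 SX SYX SY A Sz1 B Sz2))^T = invmx (ST1 SX SYX SY A Sz1 B Sz2).
  by rewrite trmx_inv; case: (pd_ST1 pX p1) => ->.
have sT2 : (invmx (ST2 SX SYX SY A Sz1 B Sz2))^T = invmx (ST2 SX SYX SY A Sz1 B Sz2).
  by rewrite trmx_inv; case: (pd_ST2 pX p2) => ->.
have K := congr1 (mulmx (SX *m B^T)) (key_id pX p1 p2); rewrite !mulmxA in K.
rewrite /SXgT12 /=.
set iS12 := invmx (ST1gT2 _ _ _ _ _ _ _) in s12 K *.
set iS21 := invmx (ST2gT1 _ _ _ _ _ _ _) in s21 K *.
set iT1 := invmx (ST1 _ _ _ _ _ _ _) in sT1 K *.
set iT2 := invmx (ST2 _ _ _ _ _ _ _) in sT2 K *.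
have h3 : (SX *m A^T *m iS12 *m A *m SX *m B^T *m iT2 *m B *m SX)^T
  = SX *m B^T *m iS21 *m B *m SX *m A^T *m iT1 *m A *m SX.
  by rewrite !trmx_mul !trmxK sX s12 sT2 !mulmxA K.
have h4 : (SX *m B^T *m iS21 *m B *m SX *m A^T *m iT1 *m A *m SX)^T
  = SX *m A^T *m iS12 *m A *m SX *m B^T *m iT2 *m B *m SX.
  by rewrite -h3 trmxK.
have h1 : (SX *m A^T *m iS12 *m A *m SX)^T = SX *m A^T *m iS12 *m A *m SX.
  by rewrite !trmx_mul !trmxK sX s12 !mulmxA.
have h5 : (SX *m B^T *m iS21 *m B *m SX)^T = SX *m B^T *m iS21 *m B *m SX.
  by rewrite !trmx_mul !trmxK sX s21 !mulmxA.
rewrite !linearD !linearN /= h1 h3 h4 h5 sX.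
by rewrite [_ - _ + _ + _]addrAC.
Qed.

Lemma sym_iSY : posdef SX -> SY^T = SY -> posdef Sz1 -> posdef Sz2 ->
  (invmx (SYgT12 SX SYX SY A Sz1 B Sz2))^T = invmx (SYgT12 SX SYX SY A Sz1 B Sz2).
Proof.
move=> pX sY p1 p2; have sX : SX^T = SX by case: pX.
rewrite trmx_inv; congr invmx.
rewrite /SYgT12; move: (SXgT12 SX SYX SY A Sz1 B Sz2) (sym_SXgT12 pX p1 p2) => S sS.
rewrite /SYgX /Theta raddfD raddfB /= !trmx_mul ?trmxK sS.
by rewrite sY trmx_inv sX !mulmxA.
Qed.

End Spec.

Lemma block_pd n1 n2 (SX : 'M[R]_n1) (SYX : 'M[R]_(n2, n1)) SY :
  posdef (block_mx SX SYX^T SYX SY) -> posdef SX /\ SY^T = SY.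
Proof.
move=> [s p]; move: s; rewrite tr_block_mx trmxK => /eq_block_mx [sX _ _ sY].
split => //; split => // v nz.
have := p (col_mx v 0); rewrite col_mx_eq0 (negPf nz) => /(_ isT).
by rewrite /quad tr_col_mx mul_row_block mul_row_col trmx0 !mul0mx !addr0 mulmx0 addr0.
Qed.

Lemma gshape (a0 b0 c0 a b c D1 D2 : R) : 0 < D1 -> 0 < D2 ->
  a + b - (a0 + b0) = c - c0 ->
  expR a / D1 * expR b = (expR a0 / D1 * expR b0 / (expR c0 / D2)) * (expR c / D2).
Proof.
move=> p1 p2 H.
have e : a + b = (a0 + b0) + (c - c0) by lra.
have E : expR a * expR b = expR a0 * expR b0 * expR c * (expR c0)^-1.
  by rewrite -expRD e !expRD expRN mulrA.
have n1 : D1 != 0 by rewrite gt_eqF.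
have n2 : D2 != 0 by rewrite gt_eqF.
have n3 : expR c0 != 0 by rewrite gt_eqF ?expR_gt0.
rewrite mulrAC E; field.
by rewrite n1 n2 n3.
Qed.

Lemma eq_by_diff (x y u v : R) : x - y = u - v -> u = v -> x = y.
Proof. by move=> H e; apply/eqP; rewrite -subr_eq0 H e subrr. Qed.

Lemma gdenom_gt0 k (S : 'M[R]_k) : posdef S -> 0 < Num.sqrt ((2 * pi) ^+ k * \det S).
Proof.
move=> pS; rewrite sqrtr_gt0 mulr_gt0 ?posdef_det_gt0 // exprn_gt0 //.
by rewrite mulr_gt0 ?pi_gt0.
Qed.

End Helpers.

Unset Implicit Arguments.
Set Strict Implicit.
Set Printing Implicit Defensive.

Theorem theorem2 (R : realType) (NX NY K1 K2 : nat)
  (SX : 'M[R]_NX) (SYX : 'M[R]_(NY, NX)) (SY : 'M[R]_NY)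
  (A : 'M[R]_(K1, NX)) (Sz1 : 'M[R]_K1) (B : 'M[R]_(K2, NX)) (Sz2 : 'M[R]_K2)
  (beta lambda gamma : R) :
  0 < beta -> 0 < lambda -> 0 <= gamma ->
  posdef (block_mx SX SYX^T SYX SY) ->
  posdef Sz1 -> posdef Sz2 ->
  let Th   := Theta  SX SYX SY A Sz1 B Sz2 in
  let iST1 := invmx (ST1 SX SYX SY A Sz1 B Sz2) in
  let iST2 := invmx (ST2 SX SYX SY A Sz1 B Sz2) in
  let iS21 := invmx (ST2gT1 SX SYX SY A Sz1 B Sz2) in
  let iS12 := invmx (ST1gT2 SX SYX SY A Sz1 B Sz2) in
  let X1   := Xi1  SX SYX SY A Sz1 B Sz2 in
  let X2   := Xi2  SX SYX SY A Sz1 B Sz2 in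
  let P1   := Psi1 SX SYX SY A Sz1 B Sz2 in
  let P2   := Psi2 SX SYX SY A Sz1 B Sz2 in
  let iSY  := invmx (SYgT12 SX SYX SY A Sz1 B Sz2) in
  (* Sigma_{zeta_1}^{-1 (t+1)} *)
  let iSz1' := iST1 - (gamma / beta) *: (X1^T *m iS21 *m X1)
               + (1 / beta) *: (P1^T *m iSY *m P1) in
  let Sz1' := invmx iSz1' in
  (* A^{(t+1)} *)
  let A' := Sz1' *m (- (gamma / beta) *: (X1^T *m iS21 *m B)
                     + (1 / beta) *: (P1^T *m iSY *m (Th - P2 *m B))) in
  (* Sigma_{zeta_2}^{-1 (t+1)} *)
  let iSz2' := iST2 - (gamma / lambda) *: (X2^T *m iS12 *m X2)
               + (1 / lambda) *: (P2^T *m iSY *m P2) in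
  let Sz2' := invmx iSz2' in
  (* B^{(t+1)} *)
  let B' := Sz2' *m (- (gamma / lambda) *: (X2^T *m iS12 *m A')
                     + (1 / lambda) *: (P2^T *m iSY *m (Th - P1 *m A'))) in
  posdef iSz1' -> posdef iSz2' ->
  (* the T1-update: p(t1|x) given by the self-consistent equation is
     N(A^{(t+1)} x, Sigma_{zeta_1}^{(t+1)}) *)
  (exists c1 : 'cV[R]_NX -> R, (forall x, 0 < c1 x) /\
     forall x t1, sc_rhs1 beta gamma SX SYX SY A Sz1 B Sz2 x t1
                  = c1 x * gauss_pdf (A' *m x) Sz1' t1) /\
  (* the T2-update, using the updated T1:
     p(t2|x) is N(B^{(t+1)} x, Sigma_{zeta_2}^{(t+1)}) *)
  (exists c2 : 'cV[R]_NX -> R, (forall x, 0 < c2 x) /\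
     forall x t2, sc_rhs2 lambda gamma SX SYX SY A Sz1 B Sz2 A' Sz1' x t2
                  = c2 x * gauss_pdf (B' *m x) Sz2' t2).
Proof.
move=> hb hl hg pB p1 p2 Th iST1 iST2 iS21 iS12 X1 X2 P1 P2 iSY iSz1' Sz1' A'
  iSz2' Sz2' B' pS1 pS2.
have [pX sY] := block_pd pB.
have uS1 := posdef_unit pS1; have uS2 := posdef_unit pS2.
have sS21 : iS21^T = iS21.
  by rewrite /iS21 trmx_inv; have [->] := pd_S21 SYX SY A B pX p1 p2.
have sS12 : iS12^T = iS12.
  by rewrite /iS12 trmx_inv; have [->] := pd_S12 SYX SY A B pX p1 p2.
have sSY : iSY^T = iSY by exact: (sym_iSY SYX A B pX sY p1 p2).
have sQ1 : iSz1'^T = iSz1' by case: pS1.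
have sQ2 : iSz2'^T = iSz2' by case: pS2.
have pT1 := pd_ST1 SYX SY A B Sz2 pX p1.
have pT2 := pd_ST2 SYX SY A Sz1 B pX p2.
have pZ1 : posdef Sz1' by exact: posdef_inv.
have pZ2 : posdef Sz2' by exact: posdef_inv.
split.
- exists (fun x => sc_rhs1 beta gamma SX SYX SY A Sz1 B Sz2 x 0 / gauss_pdf (A' *m x) Sz1' 0).
  split.
    move=> x; rewrite /sc_rhs1 /gauss_pdf.
    apply: divr_gt0; last by apply: divr_gt0; [exact: expR_gt0 | exact: gdenom_gt0].
    apply: mulr_gt0; last exact: expR_gt0.
    by apply: divr_gt0; [exact: expR_gt0 | exact: gdenom_gt0].
  move=> x t; rewrite /sc_rhs1 /gauss_pdf.
  apply: gshape; [exact: gdenom_gt0 | exact: gdenom_gt0 |].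
  rewrite /gaussKL_exp /gaussKL -/iST1 -/iS21 -/X1 -/P1 -/P2 -/iSY -/Th.
  have ev : forall (t0 : 'cV_K1) (v z : 'cV_NY), P1 *m t0 + v - z = P1 *m t0 - (z - v).
    by move=> t0 v z; rewrite opprB addrA.
  rewrite !ev !mulmx0 !subr0 !sub0r /Sz1' invmxK -/Sz1'.
  have Em : iSz1' *m (A' *m x) = - (gamma / beta) *: (X1^T *m iS21 *m (B *m x))
      + (1 / beta) *: (P1^T *m iSY *m (Th *m x - P2 *m (B *m x))).
    rewrite /A' /Sz1' mulmxA mulmxA mulmxV // mul1mx mulmxDl -!scalemxAl.
    by rewrite -!mulmxA mulmxBl -!mulmxA.
  apply: (eq_by_diff _ (core_id (Q:=iST1) (Qn:=iSz1') (X:=X1) (u:=B *m x) (M:=iS21)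
     (P:=P1) (w:=Th *m x - P2 *m (B *m x)) (N:=iSY) (m:=A' *m x) (a:=gamma/beta)
     (b:=1/beta) sS21 sSY sQ1 (erefl _) Em t)).
  ring.
- exists (fun x => sc_rhs2 lambda gamma SX SYX SY A Sz1 B Sz2 A' Sz1' x 0
                   / gauss_pdf (B' *m x) Sz2' 0).
  split.
    move=> x; rewrite /sc_rhs2 /gauss_pdf.
    apply: divr_gt0; last by apply: divr_gt0; [exact: expR_gt0 | exact: gdenom_gt0].
    apply: mulr_gt0; last exact: expR_gt0.
    by apply: divr_gt0; [exact: expR_gt0 | exact: gdenom_gt0].
  move=> x t; rewrite /sc_rhs2 /gauss_pdf.
  apply: gshape; [exact: gdenom_gt0 | exact: gdenom_gt0 |].
  rewrite /gaussKL_exp /gaussKL -/iST2 -/iS12 -/X2 -/P1 -/P2 -/iSY -/Th.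
  have ev : forall (t0 : 'cV_K2) (v z : 'cV_NY), P2 *m t0 + v - z = P2 *m t0 - (z - v).
    by move=> t0 v z; rewrite opprB addrA.
  rewrite !ev !mulmx0 !subr0 !sub0r /Sz2' invmxK -/Sz2'.
  have Em : iSz2' *m (B' *m x) = - (gamma / lambda) *: (X2^T *m iS12 *m (A' *m x))
      + (1 / lambda) *: (P2^T *m iSY *m (Th *m x - P1 *m (A' *m x))).
    have -> : B' = invmx iSz2' *m (- (gamma / lambda) *: (X2^T *m iS12 *m A')
                     + (1 / lambda) *: (P2^T *m iSY *m (Th - P1 *m A'))) by [].
    rewrite mulmxA mulmxA mulmxV // mul1mx mulmxDl -!scalemxAl.
    by clearbody A'; rewrite -!mulmxA mulmxBl -!mulmxA.
  apply: (eq_by_diff _ (core_id (Q:=iST2) (Qn:=iSz2') (X:=X2) (u:=A' *m x) (M:=iS12)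
     (P:=P2) (w:=Th *m x - P1 *m (A' *m x)) (N:=iSY) (m:=B' *m x) (a:=gamma/lambda)
     (b:=1/lambda) sS12 sSY sQ2 (erefl _) Em t)).
  ring.
Qed.
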